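(* Let $A_N^*$ be the event of Lemma 2.2 (an event in $\mathcal F^+_{\tau_N}$ with $\mathbb P[(A_N^* )^c]=O(N^{-1/8})$ on which $\sup_{x\ge0}|G_N(x)-G(x)|\le\varepsilon_N$ for a deterministic $\varepsilon_N=O(N^{-1/6})$). Suppose $G$ satisfies Assumption 2. If $b<\infty$, then there is a deterministic sequence $r_N\to0$ such that on $A_N^*$, $\sup_{0\le u\le1}|G_N^{-1}(u)-G^{-1}(u)|\le r_N$. If $b=\infty$, then there exist $\alpha>0$, deterministic $x_N$ with $N^{-\alpha}x_N$ bounded below as $N\to\infty$, and deterministic $r_N\to0$ such that on $A_N^*$, $\sup_{u:\,G^{-1}(u)\le x_N}|G_N^{-1}(u)-G^{-1}(u)|\le r_N$.
   Context: Assumption 2: the probability distribution function $G$ on $(0,\infty)$ is non-lattice with finite second moment; its support is an open interval $(a,b)$ ($0\le a<b\le\infty$), and $G(A)\ge\int_Ag(x)\,dx$ for all $A\subset(a,b)$ for some continuous positive density $g$ on $(a,b)$; if $b=\infty$ then also $g(x)\ge kx^{-\gamma}$ for all $x\ge x_0$, for some $x_0>a$, $k>0$, $\gamma>3$. $G_N$ is a (random) distribution function (in the paper: the empirical distribution of the points of the reproduction point processes of the individuals not yet infected at time $\tau_N$, measurable w.r.t. the $\sigma$-field $\mathcal F^+_{\tau_N}$). $G^{-1}$, $G_N^{-1}$ denote generalized inverses. *)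

(* Defs.v *)
From Stdlib Require Import Reals.
Open Scope R_scope.

Definition distribution_function (F : R -> R) : Prop :=
  (forall x y, x <= y -> F x <= F y) /\
  (forall x eps, 0 < eps -> exists delta, 0 < delta /\
       forall y, x <= y < x + delta -> Rabs (F y - F x) < eps) /\
  (forall eps, 0 < eps -> exists M, forall x, x <= M -> F x < eps) /\
  (forall eps, 0 < eps -> exists M, forall x, M <= x -> 1 - eps < F x).

Definition distribution_on_pos (F : R -> R) : Prop :=
  distribution_function F /\ forall x, x <= 0 -> F x = 0.

(* Lattice (arithmetic) distribution: all mass on d*Z for some span d > 0,
   i.e. every interval (x, y] missing d*Z carries no mass. *)
Definition lattice (F : R -> R) : Prop :=
  exists d, 0 < d /\
    forall x y, x <= y ->
      (forall k : Z, ~ (x < IZR k * d <= y)) -> F y = F x.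

Definition non_lattice (F : R -> R) : Prop := ~ lattice F.

(* Finite second moment: E[X^2] = 2 * int_0^oo x (1 - F x) dx < oo. *)
Definition finite_second_moment (F : R -> R) : Prop :=
  exists M, forall y, 0 <= y ->
    exists pr : Riemann_integrable (fun x => x * (1 - F x)) 0 y,
      RiemannInt pr <= M.

(* Assumption 2.  [b = None] encodes b = infinity. *)
Definition Assumption2 (G : R -> R) (a : R) (b : option R) : Prop :=
  distribution_on_pos G /\ non_lattice G /\ finite_second_moment G /\
  0 <= a /\
  (forall x, x <= a -> G x = 0) /\
  (match b with
   | Some b' => a < b' /\ forall x, b' <= x -> G x = 1
   | None => True
   end) /\
  exists g : R -> R,
    (forall x, a < x -> (match b with Some b' => x < b' | None => True end) ->
        0 < g x /\ continuity_pt g x) /\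
    (* G(A) >= int_A g on (a,b), tested on intervals (x,y] inside (a,b) *)
    (forall x y, a < x -> x <= y ->
        (match b with Some b' => y < b' | None => True end) ->
        exists pr : Riemann_integrable g x y, RiemannInt pr <= G y - G x) /\
    (match b with
     | Some _ => True
     | None => exists x0 k gamma, a < x0 /\ 0 < k /\ 3 < gamma /\
                 forall x, x0 <= x -> k * Rpower x (- gamma) <= g x
     end).

(* x is the generalized inverse F^{-1}(u) = inf { y >= 0 | F y >= u }
   (the infimum exists iff this relation has a solution). *)
Definition is_ginv (F : R -> R) (u x : R) : Prop :=
  (forall y, 0 <= y -> u <= F y -> x <= y) /\
  (forall x', (forall y, 0 <= y -> u <= F y -> x' <= y) -> x' <= x).

(* A realisation of G_N on the event A_N^*: a distribution function with
   support inside [a,b] (the points of the reproduction processes have law G)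
   and sup_{x >= 0} |G_N x - G x| <= eps_N. *)
Definition on_event (G H : R -> R) (a : R) (b : option R) (epsN : R) : Prop :=
  distribution_function H /\
  (forall x, x <= a -> H x = 0) /\
  (match b with Some b' => forall x, b' <= x -> H x = 1 | None => True end) /\
  (forall x, 0 <= x -> Rabs (H x - G x) <= epsN).

(* Main.v *)
Require Import Defs.
From Stdlib Require Import Reals.
Open Scope R_scope.
From Stdlib Require Import Lra Lia Classical ClassicalEpsilon.

Lemma int_lb (g G : R -> R) p q c0 : p <= q -> (forall t, p < t < q -> c0 <= g t) ->
  (exists pr : Riemann_integrable g p q, RiemannInt pr <= G q - G p) ->
  c0 * (q - p) <= G q - G p.
Proof.
  intros Hpq Hc [pr Hpr].
  rewrite <- (RiemannInt_P15 (RiemannInt_P14 p q c0)).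
  eapply Rle_trans; [apply (RiemannInt_P19 (RiemannInt_P14 p q c0) pr Hpq)|exact Hpr].
  intros; unfold fct_cte; auto.
Qed.

Lemma cont_lb g c : continuity_pt g c -> 0 < g c ->
  exists eta, 0 < eta /\ forall t, Rabs (t - c) < eta -> g c / 2 <= g t.
Proof.
  intros Hc Hp.
  destruct (Hc (g c / 2)) as [alp [Ha Hal]]; [lra|].
  exists alp; split; auto. intros t Ht.
  destruct (Req_dec t c) as [->|Hne]; [lra|].
  assert (H := Hal t). simpl in H. unfold R_dist in H.
  assert (H' : Rabs (g t - g c) < g c / 2) by (apply H; split; [split; [exact I| auto]|exact Ht]).
  apply Rabs_def2 in H'. lra.
Qed.

Lemma G_strict (G g : R -> R) a (P : R -> Prop) :
  (forall x y, x <= y -> P y -> P x) ->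
  (forall x y, x <= y -> G x <= G y) ->
  (forall x, a < x -> P x -> 0 < g x /\ continuity_pt g x) ->
  (forall x y, a < x -> x <= y -> P y ->
        exists pr : Riemann_integrable g x y, RiemannInt pr <= G y - G x) ->
  forall x y, a < x -> x < y -> P y -> G x < G y.
Proof.
  intros Pd Gm Hg1 Hg2 x y Hax Hxy Py.
  set (c := (x + y) / 2).
  assert (Pc : P c) by (apply (Pd c y); [unfold c; lra | exact Py]).
  assert (Hac : a < c) by (unfold c; lra).
  destruct (Hg1 c Hac Pc) as [gp gc].
  destruct (cont_lb g c gc gp) as [eta [He Heta]].
  set (e := Rmin (eta / 2) ((y - x) / 4)).
  assert (e1 : e <= eta / 2) by apply Rmin_l.
  assert (e2 : e <= (y - x) / 4) by apply Rmin_r.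
  assert (e0 : 0 < e) by (apply Rmin_glb_lt; lra).
  assert (Hi := int_lb g G (c - e) (c + e) (g c / 2)).
  assert (Hq : g c / 2 * (c + e - (c - e)) <= G (c + e) - G (c - e)).
  { apply Hi. lra.
    intros t Ht. apply Heta. apply Rabs_def1; lra.
    apply Hg2; unfold c in *; try lra. apply (Pd _ y); [lra|exact Py]. }
  assert (0 < g c / 2 * (c + e - (c - e))) by (apply Rmult_lt_0_compat; lra).
  assert (G x <= G (c - e)) by (apply Gm; unfold c in *; lra).
  assert (G (c + e) <= G y) by (apply Gm; unfold c in *; lra).
  lra.
Qed.

Lemma unif (G : R -> R) a B :
  (forall x y, x <= y -> G x <= G y) ->
  (forall x y, a < x -> x < y -> y <= B -> G x < G y) ->
  forall h, 0 < h -> exists m, 0 < m /\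
    forall p, a < p -> p + h <= B -> m <= G (p + h) - G p.
Proof.
  intros Gm Gs h hp.
  assert (Hn : forall n : nat, exists m, 0 < m /\ forall p, a < p < a + INR n * (h/2) ->
     p + h <= B -> m <= G (p + h) - G p).
  { induction n as [|n [m [m0 Hm]]].
    - exists 1; split; [lra|]. intros p Hp. simpl in Hp. lra.
    - set (c := a + INR n * (h / 2)).
      assert (Hn0 : 0 <= INR n) by apply pos_INR.
      assert (c >= a) by (unfold c; nra).
      destruct (Rle_lt_dec (c + h) B) as [Hc|Hc].
      + exists (Rmin m (G (c + h) - G (c + h / 2))). split.
        { apply Rmin_glb_lt; auto. assert (G (c + h/2) < G (c + h)) by (apply Gs; lra). lra. }
        intros p Hp HpB. rewrite S_INR in Hp.
        destruct (Rlt_le_dec p c) as [Hpc|Hpc].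
        * eapply Rle_trans; [apply Rmin_l|]. apply Hm; auto. unfold c in Hpc; lra.
        * eapply Rle_trans; [apply Rmin_r|].
          assert (G (c + h) <= G (p + h)) by (apply Gm; lra).
          assert (G p <= G (c + h / 2)) by (apply Gm; unfold c in *; lra). lra.
      + exists m; split; auto. intros p Hp HpB. rewrite S_INR in Hp.
        destruct (Rlt_le_dec p c) as [Hpc|Hpc].
        * apply Hm; auto. unfold c in Hpc; lra.
        * lra. }
  destruct (INR_archimed (h/2) (B - a)) as [n Hn']; [lra|].
  destruct (Hn n) as [m [m0 Hm]]. exists m; split; auto.
  intros p Hp HpB. apply Hm; auto. lra.
Qed.

Lemma Rabs_le_inv x e : Rabs x <= e -> - e <= x <= e.
Proof. unfold Rabs; destruct (Rcase_abs x); intros; lra. Qed.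

Lemma ginv_nonneg F u y : is_ginv F u y -> 0 <= y.
Proof. intros [_ H]. apply H. intros; auto. Qed.

Lemma ginv_approach F u y d : is_ginv F u y -> 0 < d ->
  exists w, 0 <= w /\ u <= F w /\ y <= w < y + d.
Proof.
  intros [H1 H2] Hd. apply NNPP; intro Hn.
  assert (y + d <= y); [|lra].
  apply H2. intros w Hw Hu.
  destruct (Rlt_le_dec w (y + d)) as [Hl|]; auto.
  exfalso; apply Hn; exists w; repeat split; auto.
Qed.

Lemma ginv_exists F u w0 : 0 <= w0 -> u <= F w0 -> exists z, is_ginv F u z.
Proof.
  intros H0 H1.
  set (E := fun t => exists w, 0 <= w /\ u <= F w /\ t = - w).
  assert (Hb : bound E).
  { exists 0. intros t [w [Hw [_ ->]]]. lra. }
  assert (Hne : exists t, E t) by (exists (- w0); exists w0; auto).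
  destruct (completeness E Hb Hne) as [s [Hs1 Hs2]].
  exists (- s). split.
  - intros w Hw Hu. assert (- w <= s) by (apply Hs1; exists w; auto). lra.
  - intros x' Hx'. assert (s <= - x'); [|lra].
    apply Hs2. intros t [w [Hw [Hu ->]]]. assert (x' <= w) by auto. lra.
Qed.

Lemma ginv_zero F : (forall x, 0 <= x -> 0 <= F x) -> is_ginv F 0 0.
Proof. intros H. split; [intros; lra| intros x' Hx'; apply Hx'; [lra| apply H; lra]]. Qed.

Lemma ginv_zero_uniq F y : (forall x, 0 <= x -> 0 <= F x) -> is_ginv F 0 y -> y = 0.
Proof.
  intros H Hy. assert (0 <= y) by (eapply ginv_nonneg; eauto).
  destruct Hy as [H1 _]. assert (y <= 0) by (apply H1; [lra|apply H; lra]). lra.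
Qed.

Lemma core_up (G H : R -> R) (a eps m u y d X : R)
  (Gm : forall x y, x <= y -> G x <= G y)
  (Gz : forall x, x <= a -> G x = 0)
  (Hz : forall x, x <= a -> H x = 0)
  (Hd : forall x, 0 <= x -> Rabs (H x - G x) <= eps)
  (Hu : 0 < u) (Hy : is_ginv G u y) (Hd0 : 0 < d) (Hem : eps < m)
  (Hmod : forall p, a < p -> p + d / 2 <= X -> m <= G (p + d / 2) - G p) : y + d <= X -> u <= H (y + d).
Proof.
  intros HX.
  destruct (ginv_approach G u y (d/2) Hy) as [w [Hw [Huw Hwy]]]; [lra|].
  assert (Haw : a < w).
  { destruct (Rle_lt_dec w a) as [Hl|]; auto. rewrite Gz in Huw; auto; lra. }
  assert (Hm := Hmod w Haw ltac:(lra)).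
  assert (G (w + d/2) <= G (y + d)) by (apply Gm; lra).
  assert (0 <= y) by (eapply ginv_nonneg; eauto).
  assert (Ha := Hd (y + d) ltac:(lra)). apply Rabs_le_inv in Ha. lra.
Qed.

Lemma core_low (G H : R -> R) (a eps m u y d X : R)
  (Gm : forall x y, x <= y -> G x <= G y)
  (Gz : forall x, x <= a -> G x = 0)
  (Hz : forall x, x <= a -> H x = 0)
  (Hd : forall x, 0 <= x -> Rabs (H x - G x) <= eps)
  (Hu : 0 < u) (Hy : is_ginv G u y) (Hd0 : 0 < d) (Hem : eps < m)
  (Hmod : forall p, a < p -> p + d / 2 <= X -> m <= G (p + d / 2) - G p) : y <= X -> forall w, 0 <= w -> u <= H w -> y - d <= w.
Proof.
  intros HX w Hw Huw.
  destruct (Rle_lt_dec (y - d) w) as [|Hl]; auto. exfalso.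
  assert (Haw : a < w).
  { destruct (Rle_lt_dec w a) as [Hl'|]; auto. rewrite Hz in Huw; auto; lra. }
  assert (Gq : G (w + d/2) < u).
  { destruct (Rlt_le_dec (G (w + d/2)) u) as [|Hge]; auto.
    destruct Hy as [H1 _]. assert (y <= w + d/2) by (apply H1; auto; lra). lra. }
  assert (Hm := Hmod w Haw ltac:(lra)).
  assert (Ha := Hd w Hw). apply Rabs_le_inv in Ha. lra.
Qed.


Fixpoint best (c : nat -> bool) (n : nat) : option nat :=
  match n with
  | O => if c O then Some O else None
  | S k => if c (S k) then Some (S k) else best c k
  end.

Lemma best_spec1 c n j : best c n = Some j -> c j = true /\ (j <= n)%nat.
Proof.
  induction n; simpl.
  - destruct (c O) eqn:E; intros Hb; inversion Hb; subst; auto.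
  - destruct (c (S n)) eqn:E; intros Hb.
    + inversion Hb; subst; auto.
    + destruct (IHn Hb); split; auto.
Qed.

Lemma best_spec2 c n j : c j = true -> (j <= n)%nat -> exists j', best c n = Some j' /\ (j <= j')%nat.
Proof.
  intros Hc. induction n; intros Hj; simpl.
  - assert (j = O) by lia. subst. rewrite Hc. eauto.
  - destruct (c (S n)) eqn:E.
    + exists (S n); auto.
    + destruct (Nat.eq_dec j (S n)) as [->|]; [congruence|].
      apply IHn; lia.
Qed.

Lemma cv_best (c : nat -> nat -> bool) B :
  (forall j, exists N1, forall N, (N1 <= N)%nat -> c N j = true) ->
  Un_cv (fun N => match best (c N) N with Some j => / (INR j + 1) | None => B end) 0.
Proof.
  intros Hev e He.
  destruct (archimed_cor1 e He) as [n [Hn Hn0]].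
  destruct (Hev n) as [N1 HN1].
  exists (Nat.max N1 n). intros N HN.
  destruct (best_spec2 (c N) N n) as [j' [Hb Hj]]; [apply HN1; lia| lia|].
  rewrite Hb. unfold R_dist. rewrite Rminus_0_r.
  assert (INR n <= INR j') by (apply le_INR; auto).
  assert (0 < INR n) by (apply lt_0_INR; auto).
  rewrite Rabs_pos_eq.
  - eapply Rle_lt_trans; [|exact Hn]. apply Rinv_le_contravar; lra.
  - left; apply Rinv_0_lt_compat; lra.
Qed.

Lemma lnbig T : exists N1, forall N, (N1 <= N)%nat -> T < ln (INR N).
Proof.
  destruct (INR_archimed 1 (exp T)) as [n Hn]; [lra|].
  exists n. intros N HN. rewrite Rmult_1_r in Hn.
  assert (INR n <= INR N) by (apply le_INR; auto).
  assert (0 < exp T) by apply exp_pos.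
  rewrite <- (ln_exp T) at 1. apply ln_increasing; lra.
Qed.

Lemma ev1 C K : 0 < K -> exists N1, forall N, (N1 <= N)%nat ->
  C * Rpower (INR N) (- (1/6)) < K.
Proof.
  intros HK. destruct (Rle_lt_dec C 0) as [HC|HC].
  - exists O. intros N _. unfold Rpower. assert (0 < exp (- (1/6) * ln (INR N))) by apply exp_pos. nra.
  - destruct (lnbig (- 6 * ln (K / C))) as [N1 HN1]. exists N1. intros N HN.
    specialize (HN1 N HN). unfold Rpower.
    assert (exp (- (1/6) * ln (INR N)) < K / C).
    { rewrite <- (exp_ln (K / C)) by (apply Rdiv_lt_0_compat; lra).
      apply exp_increasing. lra. }
    apply (Rmult_lt_compat_l C) in H; auto.
    replace (C * (K / C)) with K in H by (field; lra). exact H.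
Qed.

Lemma ln_le_mono x y : 0 < x -> x <= y -> ln x <= ln y.
Proof. intros Hx [Hl|<-]; [left; apply ln_increasing; auto| lra]. Qed.

Lemma rp_dec s t gam : 0 < s -> s <= t -> 0 < gam -> Rpower t (- gam) <= Rpower s (- gam).
Proof.
  intros Hs Hst Hg. unfold Rpower.
  assert (ln s <= ln t) by (apply ln_le_mono; auto).
  destruct (Req_dec (ln s) (ln t)) as [E|E].
  - rewrite E; lra.
  - left. apply exp_increasing. nra.
Qed.

Lemma ev2 C K gam : 0 < K -> 0 < gam -> exists N1, forall N, (N1 <= N)%nat ->
  C * Rpower (INR N) (- (1/6)) < K * Rpower (Rpower (INR N) (1 / (12 * gam)) + 1) (- gam).
Proof.
  intros HK Hg.
  destruct (lnbig (Rmax 0 (12 * (ln (Rabs C + 1) - ln K + gam * ln 2)))) as [N1 HN1].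
  exists (Nat.max N1 1). intros N HN. specialize (HN1 N ltac:(lia)).
  assert (HN0 : 0 < INR N) by (apply lt_0_INR; lia).
  set (L := ln (INR N)) in *.
  assert (HL : 0 < L) by (eapply Rle_lt_trans; [apply Rmax_l|exact HN1]).
  assert (HL2 : 12 * (ln (Rabs C + 1) - ln K + gam * ln 2) < L)
    by (eapply Rle_lt_trans; [apply Rmax_r|exact HN1]).
  set (al := 1 / (12 * gam)).
  assert (E1 : Rpower (INR N) al = exp (al * L)) by reflexivity.
  assert (Hal : 0 < al * L) by (unfold al; apply Rmult_lt_0_compat; auto;
     apply Rdiv_lt_0_compat; lra).
  assert (He1 : 1 <= exp (al * L)).
  { rewrite <- exp_0. left. apply exp_increasing. lra. }
  set (X := Rpower (INR N) al + 1).
  assert (HX : X <= 2 * exp (al * L)) by (unfold X; rewrite E1; lra).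
  assert (HlnX : ln X <= ln 2 + al * L).
  { rewrite <- (ln_exp (al * L)). rewrite <- ln_mult; [|lra|apply exp_pos].
    apply ln_le_mono; auto. unfold X; rewrite E1; lra. }
  assert (HR : exp (- gam * (ln 2 + al * L)) <= Rpower X (- gam)).
  { unfold Rpower. destruct (Req_dec (ln X) (ln 2 + al * L)) as [E|E].
    - rewrite E; lra.
    - left; apply exp_increasing. nra. }
  assert (Hgal : gam * al = 1 / 12) by (unfold al; field; lra).
  assert (Hk : K * exp (- gam * (ln 2 + al * L)) <= K * Rpower X (- gam)) by
    (apply Rmult_le_compat_l; lra).
  eapply Rlt_le_trans; [|exact Hk].
  assert (HC1 : 0 < Rabs C + 1) by (assert (0 <= Rabs C) by apply Rabs_pos; lra).
  assert (C * Rpower (INR N) (- (1/6)) <= (Rabs C + 1) * Rpower (INR N) (- (1/6))).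
  { apply Rmult_le_compat_r. unfold Rpower; left; apply exp_pos.
    assert (C <= Rabs C) by apply RRle_abs. lra. }
  eapply Rle_lt_trans; [exact H|].
  unfold Rpower. fold L.
  rewrite <- (exp_ln (Rabs C + 1)) at 1 by auto.
  rewrite <- (exp_ln K) at 1 by auto.
  rewrite <- !exp_plus. apply exp_increasing.
  replace (- gam * (ln 2 + al * L)) with (- gam * ln 2 - (gam * al) * L) by ring.
  rewrite Hgal. lra.
Qed.

Lemma choose_fun (Q : nat -> R -> Prop) : (forall j, exists m, Q j m) -> exists f, forall j, Q j (f j).
Proof.
  intros H. exists (fun j => proj1_sig (constructive_indefinite_description _ (H j))).
  intros j. exact (proj2_sig (constructive_indefinite_description _ (H j))).
Qed.

Lemma mono_nonneg (F : R -> R) a : 0 <= a -> (forall x y, x <= y -> F x <= F y) ->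
  (forall x, x <= a -> F x = 0) -> forall x, 0 <= x -> 0 <= F x.
Proof.
  intros Ha Fm Fz x Hx. destruct (Rle_lt_dec x a).
  - rewrite Fz; auto; lra.
  - rewrite <- (Fz a) by lra. apply Fm; lra.
Qed.

Lemma delta_pos j : 0 < / (INR j + 1).
Proof. apply Rinv_0_lt_compat. assert (0 <= INR j) by apply pos_INR. lra. Qed.

Lemma delta_le1 j : / (INR j + 1) <= 1.
Proof.
  assert (0 <= INR j) by apply pos_INR. rewrite <- Rinv_1.
  apply Rinv_le_contravar; lra.
Qed.

Theorem corollary2p3 (G : R -> R) (a : R) (b : option R) (eps : nat -> R) :
  Assumption2 G a b ->
  (exists C, forall N : nat, (1 <= N)%nat ->
       eps N <= C * Rpower (INR N) (- (1 / 6))) ->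
  match b with
  | Some _ =>
      exists r : nat -> R, Un_cv r 0 /\
        forall (N : nat) (H : R -> R), on_event G H a b (eps N) ->
          forall u, 0 <= u <= 1 ->
            exists y z, is_ginv G u y /\ is_ginv H u z /\ Rabs (z - y) <= r N
  | None =>
      exists alpha : R, 0 < alpha /\
      exists x : nat -> R,
        (exists c (N0 : nat), 0 < c /\
           forall N : nat, (N0 <= N)%nat -> c <= Rpower (INR N) (- alpha) * x N) /\
      exists r : nat -> R, Un_cv r 0 /\
        forall (N : nat) (H : R -> R), on_event G H a b (eps N) ->
          forall u y, 0 <= u <= 1 -> is_ginv G u y -> y <= x N ->
            exists z, is_ginv H u z /\ Rabs (z - y) <= r N
  end.
Proof.
  intros HA [C HC].
  destruct HA as [[[Gm _] _] [_ [_ [Ha [Gz [Hb [g [Hg1 [Hg2 Hg3]]]]]]]]].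
  assert (Gnn := mono_nonneg G a Ha Gm Gz).
  destruct b as [b'|].
  -
    destruct Hb as [Hab Gb].
    assert (Gs : forall x y, a < x -> x < y -> y <= b' -> G x < G y).
    { intros x y Hx Hxy Hy.
      assert (Gs0 := G_strict G g a (fun y => y < b') ltac:(intros; lra) Gm Hg1 Hg2).
      assert (G x < G ((x + y) / 2)) by (apply Gs0; lra).
      assert (G ((x + y) / 2) <= G y) by (apply Gm; lra). lra. }
    destruct (choose_fun (fun j m => 0 < m /\ forall p, a < p -> p + / (INR j + 1) / 2 <= b' ->
       m <= G (p + / (INR j + 1) / 2) - G p)) as [mf Hmf].
    { intros j. apply (unif G a b' Gm Gs). assert (H0 := delta_pos j). lra. }
    set (c := fun N j => if Rlt_dec (eps N) (mf j) then true else false).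
    assert (Hev : forall j, exists N1, forall N, (N1 <= N)%nat -> c N j = true).
    { intros j. destruct (ev1 C (mf j) (proj1 (Hmf j))) as [N1 HN1].
      exists (Nat.max N1 1). intros N HN. unfold c.
      destruct (Rlt_dec (eps N) (mf j)) as [|n]; auto. exfalso; apply n.
      eapply Rle_lt_trans; [apply HC; lia| apply HN1; lia]. }
    exists (fun N => match best (c N) N with Some j => / (INR j + 1) | None => b' end).
    split; [apply cv_best; exact Hev|].
    intros N H [[Hm _] [Hz [Hb1 Hd]]] u Hu.
    assert (Hnn := mono_nonneg H a Ha Hm Hz).
    destruct (Req_dec u 0) as [->|Hu0].
    + exists 0, 0. split; [apply ginv_zero; auto|]. split; [apply ginv_zero; auto|].
      rewrite Rminus_0_r, Rabs_R0. destruct (best (c N) N); [left; apply delta_pos| lra].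
    + assert (Hup : 0 < u) by lra.
      destruct (ginv_exists G u b') as [y Hy]; [lra| rewrite Gb; lra|].
      destruct (ginv_exists H u b') as [z Hz']; [lra| rewrite Hb1; lra|].
      exists y, z. split; auto. split; auto.
      assert (y0 := ginv_nonneg _ _ _ Hy). assert (z0 := ginv_nonneg _ _ _ Hz').
      assert (yb : y <= b') by (apply (proj1 Hy); [lra| rewrite Gb; lra]).
      assert (zb : z <= b') by (apply (proj1 Hz'); [lra| rewrite Hb1; lra]).
      destruct (best (c N) N) as [j|] eqn:E.
      * destruct (best_spec1 _ _ _ E) as [Ec _]. unfold c in Ec.
        destruct (Rlt_dec (eps N) (mf j)) as [Hem|]; [|discriminate].
        set (d := / (INR j + 1)).
        assert (d0 : 0 < d) by apply delta_pos.
        assert (Hmod := proj2 (Hmf j)). fold d in Hmod.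
        assert (Hlow : y - d <= z).
        { apply (proj2 Hz'). intros w Hw Huw.
          eapply (core_low G H a (eps N) (mf j) u y d b'); eauto. }
        assert (Hhi : z <= y + d).
        { destruct (Rle_lt_dec (y + d) b') as [Hl|Hl]; [|lra].
          apply (proj1 Hz'); [lra|].
          eapply (core_up G H a (eps N) (mf j) u y d b'); eauto. }
        apply Rabs_le; lra.
      * apply Rabs_le; lra.
  -
    destruct Hg3 as [x0 [k [gam [Hx0 [Hk [Hgam Hgk]]]]]].
    assert (Gs : forall x y, a < x -> x < y -> G x < G y).
    { intros x y Hx Hxy.
      apply (G_strict G g a (fun _ => True) ltac:(auto) Gm Hg1 Hg2); auto. }
    assert (Hpow : forall p q, x0 <= p -> p <= q -> k * Rpower q (- gam) * (q - p) <= G q - G p).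
    { intros p q Hp Hpq. apply (int_lb g G p q); auto.
      - intros t Ht. eapply Rle_trans; [|apply Hgk; lra].
        apply Rmult_le_compat_l; [lra|]. apply rp_dec; lra.
      - apply Hg2; auto; lra. }
    destruct (choose_fun (fun j m => 0 < m /\ forall p, a < p -> p + / (INR j + 1) / 2 <= x0 + 1 ->
       m <= G (p + / (INR j + 1) / 2) - G p)) as [mf Hmf].
    { intros j. apply (unif G a (x0 + 1) Gm). intros; apply Gs; lra.
      assert (H0 := delta_pos j). lra. }
    set (al := 1 / (12 * gam)).
    assert (Hal : 0 < al) by (unfold al; apply Rdiv_lt_0_compat; lra).
    set (X := fun N => Rpower (INR N) al + 1).
    set (M := fun j N => Rmin (mf j) (k * (/ (INR j + 1) / 2) * Rpower (X N) (- gam))).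
    set (c := fun N j => if Rlt_dec (eps N) (M j N) then true else false).
    assert (Hev : forall j, exists N1, forall N, (N1 <= N)%nat -> c N j = true).
    { intros j. destruct (ev1 C (mf j) (proj1 (Hmf j))) as [N1 HN1].
      assert (Kp : 0 < k * (/ (INR j + 1) / 2)).
      { assert (H0 := delta_pos j). apply Rmult_lt_0_compat; lra. }
      destruct (ev2 C _ gam Kp ltac:(lra)) as [N2 HN2].
      exists (Nat.max (Nat.max N1 N2) 1). intros N HN. unfold c.
      destruct (Rlt_dec (eps N) (M j N)) as [|n]; auto. exfalso; apply n.
      unfold M. apply Rmin_glb_lt.
      - eapply Rle_lt_trans; [apply HC; lia| apply HN1; lia].
      - eapply Rle_lt_trans; [apply HC; lia|]. unfold X, al. apply HN2; lia. }
    exists al. split; auto.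
    exists (fun N => match best (c N) N with Some _ => Rpower (INR N) al | None => -1 end).
    split.
    { destruct (Hev O) as [N0 HN0]. exists 1, (Nat.max N0 1). split; [lra|].
      intros N HN. destruct (best_spec2 (c N) N O) as [j' [Hb' _]]; [apply HN0; lia|lia|].
      rewrite Hb'. rewrite <- Rpower_plus. replace (- al + al) with 0 by ring.
      rewrite Rpower_O; [lra|]. apply lt_0_INR; lia. }
    exists (fun N => match best (c N) N with Some j => / (INR j + 1) | None => 0 end).
    split; [apply cv_best; exact Hev|].
    intros N H [[Hm _] [Hz [_ Hd]]] u y Hu Hy HyN.
    assert (Hnn := mono_nonneg H a Ha Hm Hz).
    assert (y0 := ginv_nonneg _ _ _ Hy).
    destruct (best (c N) N) as [j|] eqn:E; [|lra].
    destruct (best_spec1 _ _ _ E) as [Ec _]. unfold c in Ec.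
    destruct (Rlt_dec (eps N) (M j N)) as [Hem|]; [|discriminate].
    set (d := / (INR j + 1)) in *.
    assert (d0 : 0 < d) by apply delta_pos.
    assert (d1 : d <= 1) by apply delta_le1.
    destruct (Req_dec u 0) as [->|Hu0].
    + exists 0. split; [apply ginv_zero; auto|].
      rewrite (ginv_zero_uniq G y Gnn Hy). rewrite Rminus_0_r, Rabs_R0. lra.
    + assert (Hup : 0 < u) by lra.
      assert (Hmod : forall p, a < p -> p + d / 2 <= X N -> M j N <= G (p + d / 2) - G p).
      { intros p Hp HpX. destruct (Rlt_le_dec p x0) as [Hpx|Hpx].
        - eapply Rle_trans; [apply Rmin_l|]. apply (proj2 (Hmf j)); auto. fold d. lra.
        - eapply Rle_trans; [apply Rmin_r|]. fold d.
          eapply Rle_trans; [|apply Hpow; lra].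
          replace (p + d / 2 - p) with (d / 2) by ring.
          assert (Rpower (X N) (- gam) <= Rpower (p + d / 2) (- gam)) by (apply rp_dec; lra).
          assert (0 < k * (d / 2)) by (apply Rmult_lt_0_compat; lra).
          nra. }
      assert (HyX : y + d <= X N) by (unfold X; lra).
      assert (Hh := core_up G H a (eps N) (M j N) u y d (X N) Gm Gz Hz Hd Hup Hy d0 Hem Hmod HyX).
      destruct (ginv_exists H u (y + d)) as [z Hz']; [lra| exact Hh|].
      exists z. split; auto.
      assert (Hlow : y - d <= z).
      { apply (proj2 Hz'). intros w Hw Huw.
        eapply (core_low G H a (eps N) (M j N) u y d (X N)); eauto. lra. }
      assert (Hhi : z <= y + d) by (apply (proj1 Hz'); [lra| exact Hh]).
      apply Rabs_le; lra.
Qed.
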